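(* Let $a>0$, $a_N=a\ln N/N$, and for each $N$ let $P_{N,a_N}$ be the probability on sequences $(n_j)_{j\ge0}$ of nonnegative integers with $\sum_jn_j=N$ given by $P_{N,a_N}((n_j))\propto e^{-a_N\sum_jjn_j}$, with $\langle n_0\rangle_{N,a_N}$ the expectation of $n_0$. Then the critical value is $a_c=1$: for $a<1$, $\frac1N\langle n_0\rangle_{N,a_N}\to0$ (no BEC). For $a>1$ and $\lambda_N=1-m_N/N$ (integers $0\le m_N\le N$) with $0<\lim\lambda_N<1-a^{-1}$, $\lim_{N\to\infty}P_{N,a_N}(n_0/N\ge\lambda_N)=1$; moreover $\lim_{N\to\infty}\frac1N\langle n_0\rangle_{N,a_N}\ge1-\frac1a$.
   Context: This is the canonical ensemble of $N$ noninteracting bosons in a one-dimensional harmonic trap of scaled frequency $\omega\ln N/N$, with $a=\hbar\omega\beta$. *)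

(* Defs.v *)
From HB Require Import structures.
From mathcomp Require Import all_boot all_order all_algebra.
From mathcomp Require Import all_classical all_reals all_analysis.
Set Implicit Arguments. Unset Strict Implicit. Unset Printing Implicit Defensive.
Import Order.TTheory GRing.Theory Num.Theory.
Local Open Scope classical_set_scope.
Local Open Scope ring_scope.

(* Canonical ensemble of N noninteracting bosons in a 1D harmonic trap.
   A configuration is an occupation sequence n : nat -> nat, n j = number of
   particles in level j. *)

Definition occ_total (R : realType) (n : nat -> nat) : \bar R :=
  \esum_(j in [set: nat]) ((n j)%:R)%:E.

Definition energy (R : realType) (n : nat -> nat) : \bar R :=
  \esum_(j in [set: nat]) ((j * n j)%:R)%:E.

Definition Omega (R : realType) (N : nat) : set (nat -> nat) :=
  [set n | occ_total R n = (N%:R)%:E].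

Definition bweight (R : realType) (b : R) (n : nat -> nat) : \bar R :=
  expeR (- (b%:E * energy R n))%E.

Definition Zpart (R : realType) (N : nat) (b : R) : \bar R :=
  \esum_(n in Omega R N) bweight b n.

Definition Prob (R : realType) (N : nat) (b : R) (A : set (nat -> nat)) : R :=
  fine (\esum_(n in Omega R N `&` A) bweight b n) / fine (Zpart N b).

Definition mean_n0 (R : realType) (N : nat) (b : R) : R :=
  fine (\esum_(n in Omega R N) ((n 0%N)%:R%:E * bweight b n)%E) / fine (Zpart N b).

Definition aN (R : realType) (a : R) (N : nat) : R := a * ln (N%:R) / N%:R.

(* Main.v *)
Require Import Defs.
From HB Require Import structures.
From mathcomp Require Import all_boot all_order all_algebra.
From mathcomp Require Import all_classical all_reals all_analysis.
From mathcomp Require Import ring lra.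
Import Order.TTheory GRing.Theory Num.Theory.
Local Open Scope classical_set_scope.
Local Open Scope ring_scope.

Section Comb.
Variable R : realType.
Local Open Scope ereal_scope.

Lemma esumZl (T : choiceType) (I : set T) (c : R) (f : T -> \bar R) :
  (0 <= c)%R -> (forall x, 0 <= f x) ->
  \esum_(i in I) (c%:E * f i) = c%:E * \esum_(i in I) f i.
Proof.
move=> c0 f0.
have key : forall (d : R) (g : T -> \bar R), (0 <= d)%R -> (forall x, 0 <= g x) ->
    \esum_(i in I) (d%:E * g i) <= d%:E * \esum_(i in I) g i.
  move=> d g d0 g0; apply: ge_ereal_sup => _ [X [finX XI] <-].
  rewrite -ge0_mule_fsumr //; apply: lee_wpmul2l; first by rewrite lee_fin.
  by apply: esum_ge; exists X.
have [->|cpos] := eqVneq c 0%R.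
  by rewrite mul0e esum1 // => i _; rewrite mul0e.
have cg : (0 < c)%R by rewrite lt_def cpos c0.
apply/eqP; rewrite eq_le key //=.
have -> : \esum_(i in I) f i = \esum_(i in I) ((c^-1)%R%:E * (c%:E * f i)).
  by apply: eq_esum => i _; rewrite muleA -EFinM mulVf // mul1e.
rewrite (le_trans (lee_wpmul2l _ (key (c^-1)%R _ _ _))) //.
- by rewrite invr_ge0.
- by move=> x; apply: mule_ge0 => //; rewrite lee_fin.
- by rewrite muleA -EFinM mulfV // mul1e.
Qed.

Definition S (f : nat -> nat) : \bar R := \esum_(j in [set: nat]) ((f j)%:R)%:E.

Lemma S_ge0 f : 0 <= S f.
Proof. by apply: esum_ge0 => x _; rewrite lee_fin. Qed.

Lemma SD f g : S (fun j => (f j + g j)%N) = S f + S g.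
Proof.
rewrite /S -esumD; first by apply: eq_esum => j _; rewrite natrD EFinD.
all: by move=> *; rewrite ?lee_fin ?ler0n.
Qed.

Lemma SZ c f : S (fun j => (c * f j)%N) = c%:R%:E * S f.
Proof.
rewrite /S -esumZl; first by apply: eq_esum => j _; rewrite natrM EFinM.
all: by move=> *; rewrite ?lee_fin ?ler0n.
Qed.

Lemma S1 s c : S (fun j => if j == s then c else 0%N) = c%:R%:E.
Proof.
rewrite /S; transitivity (\esum_(j in [set s]) (c%:R)%:E : \bar R).
  rewrite [RHS]esum_mkcond; apply: eq_esum => j _; rewrite in_set1.
  by case: eqP.
by rewrite esum_set1 // lee_fin.
Qed.

Lemma S_shift s f : S (fun j => if (s <= j)%N then f (j - s)%N else 0%N) = S f.
Proof.
rewrite /S; transitivity (\esum_(j in [set j | (s <= j)%N]) ((f (j - s)%N)%:R)%:E : \bar R).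
  rewrite [RHS]esum_mkcond; apply: eq_esum => j _.
  case: ifPn => sj; [by rewrite (mem_set (sj : [set j | (s <= j)%N] j)) | rewrite memNset //; exact/negP].
rewrite (reindex_esum [set: nat] _ (fun i => (i + s)%N)).
  by apply: eq_esum => i _; rewrite addnK.
split.
- by move=> i _ /=; rewrite leq_addl.
- by move=> i j _ _ /addIn.
- move=> j /= sj; exists (j - s)%N => //; by rewrite subnK.
Qed.

Lemma S_le f j : ((f j)%:R)%:E <= S f.
Proof.
apply: esum_ge; exists [set j]; first by split => //; exact: finite_set1.
by rewrite fsbig_set1.
Qed.


Lemma occE n : occ_total R n = S n. Proof. by []. Qed.
Lemma energyE n : energy R n = S (fun j => (j * n j)%N). Proof. by []. Qed.

Lemma S0 f : (forall j, f j = 0%N) -> S f = 0.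
Proof. by move=> f0; rewrite /S esum1 // => j _; rewrite f0. Qed.

Lemma S_eq0 f : S f = 0 -> forall j, f j = 0%N.
Proof.
move=> h j; have := S_le f j; rewrite h lee_fin lern0.
by move/eqP.
Qed.

Lemma fin_addK (x : \bar R) (k N : nat) : 0 <= x ->
  x + (k%:R)%:E = (N%:R)%:E -> (k <= N)%N /\ x = ((N - k)%N%:R)%:E.
Proof.
case: x => [r| |] //= r0 h.
  have hr : (r + k%:R = N%:R)%R by move: h => [].
  have kN : (k <= N)%N.
    by rewrite -(ler_nat R) -hr lerDr -lee_fin.
  by split => //; rewrite natrB // -hr addrK.
Qed.

Definition sh (s : nat) (n : nat -> nat) : nat -> nat :=
  fun j => ((if (s <= j)%N then n (j - s)%N else 0%N) + (if j == s then 1 else 0))%N.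

Lemma occ_sh s n : S (sh s n) = S n + 1.
Proof. by rewrite /sh SD S_shift S1. Qed.

Lemma energy_sh s n :
  S (fun j => (j * sh s n j)%N) = S (fun j => (j * n j)%N) + (s%:R)%:E * S n + (s%:R)%:E.
Proof.
have E j : (j * sh s n j =
   (if (s <= j)%N then (fun i => i * n i + s * n i) (j - s) else 0) + (if j == s then s else 0))%N.
  rewrite /sh mulnDr; congr (_ + _)%N.
    by case: ifP => sj //=; rewrite ?muln0 // -mulnDl subnK.
  by case: eqP => [->|]; rewrite ?muln1 ?muln0.
transitivity (S (fun j => ((if (s <= j)%N then (fun i => i * n i + s * n i)%N (j - s)%N else 0%N) + (if j == s then s else 0))%N)).
  by congr S; apply: funext => j; rewrite E.
by rewrite SD (S_shift s (fun i => (i * n i + s * n i)%N)) S1 SD SZ.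
Qed.

Definition add0 (k : nat) (n : nat -> nat) : nat -> nat :=
  fun j => (n j + (if j == 0%N then k else 0))%N.

Lemma occ_add0 k n : S (add0 k n) = S n + (k%:R)%:E.
Proof. by rewrite /add0 SD S1. Qed.

Lemma energy_add0 k n : energy R (add0 k n) = energy R n.
Proof.
rewrite !energyE; congr S; apply: funext => j; rewrite /add0.
by case: eqP => [->|]; rewrite ?mul0n ?addn0.
Qed.


Lemma sh_ge s n j : sh s n j != 0%N -> (s <= j)%N.
Proof.
rewrite /sh; case: leqP => // sj; case: (j =P s) => [e|] //; by rewrite e ltnn in sj.
Qed.

Lemma sh_s s n : sh s n s != 0%N.
Proof. by rewrite /sh leqnn eqxx addn1. Qed.

Lemma sh_shift s n j : sh s n (j + s) = (n j + (j == 0%N))%N.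
Proof.
rewrite /sh leq_addl addnK; congr (_ + _)%N.
by rewrite -{2}(add0n s) eqn_add2r.
Qed.

Lemma sh_bij M : set_bij ([set: nat] `*`` (fun=> Omega R M)) (Omega R M.+1)
  (fun p => sh p.1 p.2).
Proof.
split.
- move=> [s n] [_ /= hn]; rewrite /Omega /= occE occ_sh -occE hn.
  by rewrite -EFinD -natr1.
- move=> [s n] [s' n'] _ _ /= h.
  have ss' : s = s'.
    apply/eqP; rewrite eqn_leq; apply/andP; split.
      by apply: (@sh_ge s n s'); rewrite h sh_s.
    by apply: (@sh_ge s' n' s); rewrite -h sh_s.
  subst s'; congr pair; apply: funext => j.
  have := congr1 (fun f => f (j + s)%N) h => /=.
  by rewrite !sh_shift => /addIn.
- move=> n /= hn.
  have [[j nj]|H] := pselect (exists j, n j != 0%N); last first.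
    have : S n = 0.
      by apply: S0 => j; apply/eqP; apply/negPn/negP => nj; apply: H; exists j.
    by rewrite -occE hn => /eqP; rewrite eqe pnatr_eq0.
  have exj : exists j, n j != 0%N by exists j.
  case: (ex_minnP exj) => s hs hmin.
  pose n' := fun j => (n (j + s) - (j == 0%N))%N.
  have E : sh s n' = n.
    apply: funext => i; rewrite /sh /n'.
    case: (leqP s i) => si.
      rewrite subnK //; case: (i =P s) => [->|ne].
        by rewrite subnn eqxx /= addn1 subn1 prednK // lt0n.
      have -> : (i - s == 0)%N = false.
        by apply/negP => /eqP h0; apply: ne; apply/eqP; rewrite eqn_leq si -subn_eq0 h0.
      by rewrite !subn0 addn0.
    have -> : (i == s) = false by apply/negP => /eqP e; rewrite e ltnn in si.
    rewrite add0n; apply/esym/eqP/negP => /negP h.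
    by have := hmin i h; rewrite leqNgt si.
  exists (s, n') => //; split => //=.
  have := hn; rewrite /Omega /= occE -E occ_sh -occE => h.
  have := @fin_addK _ 1 M.+1 _ h.
  case; first by rewrite occE; exact: S_ge0.
  by move=> _ ->; rewrite subn1.
Qed.

Lemma add0_bij M k : set_bij (Omega R M)
   (Omega R (M + k) `&` [set n | (k <= n 0%N)%N]) (add0 k).
Proof.
split.
- move=> n hn; split.
    by rewrite /Omega /= occE occ_add0 -occE hn -EFinD natrD.
  by rewrite /= /add0 /= leq_addl.
- move=> n n' _ _ h; apply: funext => j.
  by have := congr1 (fun f => f j) h; rewrite /add0 => /addIn.
- move=> n [hn hk].
  pose n' := fun j => (n j - (if j == 0%N then k else 0))%N.
  have E : add0 k n' = n.
    apply: funext => j; rewrite /add0 /n'; case: eqP => [->|_].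
      by rewrite subnK.
    by rewrite !subn0 addn0.
  exists n' => //.
  have := hn; rewrite /Omega /= occE -E occ_add0 -occE => h.
  have := @fin_addK _ k (M + k) _ h.
  case; first by rewrite occE; exact: S_ge0.
  by move=> _ ->; rewrite addnK.
Qed.


Lemma bweight_ge0 (b : R) n : 0 <= bweight b n.
Proof. exact: expeR_ge0. Qed.

Lemma bweight_sh (b : R) M s n : (0 <= b)%R -> occ_total R n = (M%:R)%:E ->
  bweight b (sh s n) = bweight b n * (expR (- (b * (s * M.+1)%:R)))%:E.
Proof.
move=> b0 hn; rewrite /bweight energyE energy_sh -(occE n) hn -energyE.
rewrite -EFinM -natrM -addeA -EFinD -natrD.
have -> : (s * M + s = s * M.+1)%N by rewrite mulnS addnC.
rewrite ge0_muleDr ?lee_fin //; last by rewrite energyE S_ge0.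
rewrite -EFinM oppeD //=; [exact: expeRD | exact: fin_num_adde_defl].
Qed.

Lemma esum_geom (z r : R) : (0 <= z)%R -> (0 <= r)%R -> (r < 1)%R ->
  \esum_(s in [set: nat]) ((z * r ^+ s)%:E) = (z / (1 - r))%:E.
Proof.
move=> z0 r0 r1.
rewrite -nneseries_esumT; last by move=> n; rewrite lee_fin mulr_ge0 // exprn_ge0.
have hc : (`|r| < 1)%R by rewrite ger0_norm.
rewrite (_ : (fun n => \sum_(0 <= i < n) ((z * r ^+ i)%:E)) = EFin \o series (geometric z r)); last first.
  by apply: funext => n; rewrite /series /= sumEFin.
rewrite EFin_lim; last exact: (@is_cvg_geometric_series _ z _ hc).
have /(@cvg_unique _ (@Rhausdorff R)) := @cvg_geometric_series _ z _ hc.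
by move/(_ _ (@is_cvg_geometric_series _ z _ hc)) => ->.
Qed.


Definition G (b : R) (M : nat) : R := \prod_(i < M) (1 - expR (- b) ^+ i.+1).

Lemma q_lt1 (b : R) i : (0 < b)%R -> (expR (- b) ^+ i.+1 < 1)%R.
Proof.
move=> b0; rewrite exprn_ilt1 ?expR_ge0 //.
by rewrite expR_lt1 oppr_lt0.
Qed.

Lemma G_gt0 (b : R) M : (0 < b)%R -> (0 < G b M)%R.
Proof.
move=> b0; rewrite /G; apply: prodr_gt0 => i _.
by rewrite subr_gt0 q_lt1.
Qed.

Lemma Omega0 : Omega R 0 = [set fun=> 0%N].
Proof.
apply/seteqP; split => n /=.
  rewrite /Omega /= occE => h; apply: funext => j; apply: S_eq0.
  by rewrite h.
by move=> ->; rewrite /Omega /= occE S0.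
Qed.

Lemma Zpart_eq (b : R) M : (0 < b)%R -> Zpart M b = ((G b M)^-1)%:E.
Proof.
move=> b0; elim: M => [|M IH].
  rewrite /Zpart Omega0 esum_set1 ?bweight_ge0 // /bweight energyE S0; last by move=> j; rewrite muln0.
  by rewrite mule0 oppe0 expeR0 /G big_ord0 invr1.
rewrite /Zpart (reindex_esum ([set: nat] `*`` (fun=> Omega R M)) _ (fun p => sh p.1 p.2)); last exact: sh_bij.
rewrite -(esum_esum (a := fun s n => bweight b (sh s n))); last by move=> *; exact: bweight_ge0.
pose r := (expR (- b) ^+ M.+1)%R.
transitivity (\esum_(s in [set: nat]) (((G b M)^-1 * r ^+ s)%R%:E)).
  apply: eq_esum => s _.
  have -> : (((G b M)^-1 * r ^+ s)%R%:E) = ((r ^+ s)%R)%:E * Zpart M b.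
    by rewrite IH -EFinM mulrC.
  rewrite /Zpart -esumZl; last by move=> x; exact: bweight_ge0.
    apply: eq_esum => n hn; rewrite (@bweight_sh b M) //; last exact: ltW.
    rewrite muleC; congr (_ * _); congr EFin.
    by rewrite /r -exprM -expRM_natr natrM mulNr mulnC natrM mulrA.
  by rewrite exprn_ge0 // exprn_ge0 // expR_ge0.
rewrite esum_geom //.
- by rewrite /G big_ord_recr /= invfM.
- by rewrite invr_ge0 ltW // G_gt0.
- by rewrite /r exprn_ge0 // expR_ge0.
- exact: q_lt1.
Qed.


Lemma esum_event (b : R) N k : (0 < b)%R -> (k <= N)%N ->
  \esum_(n in Omega R N `&` [set n | (k <= n 0%N)%N]) bweight b n = ((G b (N - k))^-1)%:E.
Proof.
move=> b0 kN; have := add0_bij (N - k) k; rewrite subnK // => hb.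
rewrite (reindex_esum _ _ _ _ hb) -Zpart_eq //.
by apply: eq_esum => n _; rewrite /bweight energy_add0.
Qed.

Definition Pk (b : R) N k := (G b N / G b (N - k))%R.

Lemma Prob_event (b : R) N k : (0 < b)%R -> (k <= N)%N ->
  Prob N b [set n | (k <= n 0%N)%N] = Pk b N k.
Proof.
move=> b0 kN; rewrite /Prob esum_event // Zpart_eq //= invrK mulrC.
by [].
Qed.

Lemma Pk_prod (b : R) N k : (0 < b)%R -> (k <= N)%N ->
  Pk b N k = (\prod_((N - k)%N <= i < N) (1 - expR (- b) ^+ i.+1))%R.
Proof.
move=> b0 kN; rewrite /Pk /G -!(big_mkord xpredT (fun i => 1 - expR (- b) ^+ i.+1))%R.
rewrite (big_cat_nat (leq0n (N - k)) (leq_subr k N)) /= mulrC mulrA mulVf ?mul1r //.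
by rewrite big_mkord; apply: lt0r_neq0; exact: (@G_gt0 b (N - k) b0).
Qed.

Definition T0 (b : R) N := \esum_(n in Omega R N) ((n 0%N)%:R%:E * bweight b n).

Lemma T0_lo (b : R) N k : ((k%:R)%:E * \esum_(n in Omega R N `&` [set n | (k <= n 0%N)%N]) bweight b n) <= T0 b N.
Proof.
rewrite esum_mkcondr -esumZl //; last first.
  by move=> n; case: ifP => _ //; exact: bweight_ge0.
apply: le_esum => n hn; case: ifPn => hB.
  apply: lee_wpmul2r; first exact: bweight_ge0.
  by rewrite lee_fin ler_nat; move/set_mem: hB.
by rewrite mule0 mule_ge0 ?bweight_ge0 // lee_fin.
Qed.

Lemma T0_hi (b : R) N k : T0 b N <= (k%:R)%:E * Zpart N b +
  (N%:R)%:E * \esum_(n in Omega R N `&` [set n | (k <= n 0%N)%N]) bweight b n.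
Proof.
rewrite /Zpart esum_mkcondr.
rewrite -[X in _ <= X + _]esumZl; last by move=> n; exact: bweight_ge0.
  rewrite -[X in _ <= _ + X]esumZl; last by move=> n; case: ifP => _ //; exact: bweight_ge0.
  2,3: by rewrite ler0n.
rewrite -esumD; first last.
- by move=> n _; rewrite mule_ge0 // ?lee_fin //; case: ifP => _ //; exact: bweight_ge0.
- by move=> n _; rewrite mule_ge0 ?bweight_ge0 // lee_fin.
apply: le_esum => n hn; case: ifPn => hB.
  have h0 : ((n 0%N)%:R)%:E <= (N%:R)%:E :> \bar R.
    by have := S_le n 0%N; rewrite -occE hn.
  apply: (le_trans _ (leeDr _ _)); last by rewrite mule_ge0 ?bweight_ge0 // lee_fin.
  by apply: lee_wpmul2r => //; exact: bweight_ge0.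
rewrite mule0 adde0; apply: lee_wpmul2r; first exact: bweight_ge0.
rewrite lee_fin ler_nat; apply: ltnW; rewrite ltnNge; apply/negP => h.
by apply: (negP hB); apply: mem_set.
Qed.


Lemma T0_fin (b : R) N : (0 < b)%R -> T0 b N \is a fin_num.
Proof.
move=> b0; rewrite ge0_fin_numE; last first.
  by apply: esum_ge0 => n _; rewrite mule_ge0 ?bweight_ge0 // lee_fin.
apply: (le_lt_trans (T0_hi b N 0)); rewrite Zpart_eq // esum_event // -!EFinM -EFinD.
exact: ltry.
Qed.

Lemma mean_lo (b : R) N k : (0 < b)%R -> (k <= N)%N ->
  (k%:R * Pk b N k <= mean_n0 N b)%R.
Proof.
move=> b0 kN; have hfin := @T0_fin b N b0.
have := T0_lo b N k; rewrite esum_event // -EFinM -(fineK hfin) lee_fin => h.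
rewrite /mean_n0 -/(T0 b N) Zpart_eq //= invrK /Pk mulrA.
rewrite mulrAC; apply: ler_wpM2r => //; apply: ltW; exact: (@G_gt0 b N b0).
Qed.

Lemma mean_hi (b : R) N k : (0 < b)%R -> (k <= N)%N ->
  (mean_n0 N b <= k%:R + N%:R * Pk b N k)%R.
Proof.
move=> b0 kN; have hfin := @T0_fin b N b0.
have := T0_hi b N k; rewrite esum_event // Zpart_eq // -!EFinM -EFinD -(fineK hfin) lee_fin => h.
rewrite /mean_n0 -/(T0 b N) Zpart_eq //= invrK /Pk.
have GN := @G_gt0 b N b0.
apply: (le_trans (ler_wpM2r (ltW GN) h)).
rewrite mulrDl -mulrA mulVf ?mulr1 ?lt0r_neq0 //.
by rewrite mulrAC mulrA.
Qed.

End Comb.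
Arguments Pk {R}. Arguments G {R}. Arguments T0 {R}. Arguments S {R}.

Section Analytic.
Variable R : realType.

Lemma bern_up (y : R) k : 0 <= y -> 1 + k%:R * y <= (1 + y) ^+ k.
Proof.
move=> y0; elim: k => [|k IH]; first by rewrite mul0r addr0 expr0.
rewrite exprS -natr1.
have h1 : 0 <= 1 + y by lra.
have hk : 0 <= k%:R * y :> R by rewrite mulr_ge0.
apply: (le_trans _ (ler_wpM2l h1 IH)); nra.
Qed.

Lemma bern_lo (y : R) k : 0 <= y <= 1 -> 1 - k%:R * y <= (1 - y) ^+ k.
Proof.
move=> /andP[y0 y1]; elim: k => [|k IH]; first by rewrite mul0r subr0 expr0.
rewrite exprS -natr1.
have h1 : 0 <= 1 - y by lra.
have hk : 0 <= k%:R * y :> R by rewrite mulr_ge0.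
apply: (le_trans _ (ler_wpM2l h1 IH)); nra.
Qed.

Lemma bern_hi (y : R) k : 0 <= y <= 1 -> (1 - y) ^+ k * (1 + k%:R * y) <= 1.
Proof.
move=> /andP[y0 y1].
have h1 : 0 <= 1 - y by lra.
have h2 := bern_up y k y0.
have h3 : (1 - y) ^+ k * (1 + k%:R * y) <= (1 - y) ^+ k * (1 + y) ^+ k.
  by apply: ler_wpM2l => //; exact: exprn_ge0.
apply: (le_trans h3); rewrite -exprMn; apply: exprn_ile1; nra.
Qed.

Lemma q_ge0 (b : R) : 0 <= expR (- b). Proof. exact: expR_ge0. Qed.

Lemma Pk_hi (b : R) N k : 0 < b -> (k <= N)%N ->
  Pk b N k * (1 + k%:R * expR (- (b * N%:R))) <= 1.
Proof.
move=> b0 kN; rewrite Pk_prod //.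
have q1 : expR (- b) <= 1 by rewrite expR_le1 oppr_le0 ltW.
have hy : 0 <= expR (- b) ^+ N <= 1 by rewrite exprn_ge0 ?q_ge0 ?exprn_ile1 ?q_ge0.
rewrite -mulNr expRM_natr.
apply: le_trans (bern_hi _ k hy); apply: ler_wpM2r.
  by rewrite addr_ge0 // mulr_ge0 // exprn_ge0 ?q_ge0.
apply: (@le_trans _ _ (\prod_((N - k)%N <= i < N) (1 - expR (- b) ^+ N))).
  rewrite big_nat_cond [X in _ <= X]big_nat_cond; apply: ler_prod => i /andP[/andP[_ hi] _].
  rewrite subr_ge0 exprn_ile1 ?q_ge0 //=.
  by rewrite lerB // ler_wiXn2l ?q_ge0.
by rewrite prodr_const_nat subKn.
Qed.

Lemma Pk_le1 (b : R) N k : 0 < b -> (k <= N)%N -> Pk b N k <= 1.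
Proof.
move=> b0 kN; rewrite Pk_prod //.
have q1 : expR (- b) <= 1 by rewrite expR_le1 oppr_le0 ltW.
apply: prodr_ile1 => i _.
rewrite subr_ge0 exprn_ile1 ?q_ge0 //= lerBlDr lerDl exprn_ge0 ?q_ge0 //.
Qed.

Lemma Pk_lo (b : R) N k : 0 < b -> (k <= N)%N ->
  1 - N%:R * expR (- (b * (N - k)%N%:R)) <= Pk b N k.
Proof.
move=> b0 kN; rewrite Pk_prod //.
have q1 : expR (- b) <= 1 by rewrite expR_le1 oppr_le0 ltW.
have hy : 0 <= expR (- b) ^+ (N - k) <= 1 by rewrite exprn_ge0 ?q_ge0 ?exprn_ile1 ?q_ge0.
rewrite -[- (b * _)]mulNr expRM_natr.
apply: (@le_trans _ _ (\prod_((N - k)%N <= i < N) (1 - expR (- b) ^+ (N - k)))); last first.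
  rewrite big_nat_cond [X in _ <= X]big_nat_cond; apply: ler_prod => i /andP[/andP[hi _] _].
  rewrite subr_ge0 exprn_ile1 ?q_ge0 //=.
  rewrite lerB // ler_wiXn2l ?q_ge0 //.
  by apply: leq_trans hi _.
rewrite prodr_const_nat subKn //.
apply: le_trans (bern_lo _ k hy).
by rewrite lerB // ler_wpM2r ?ler_nat //; case/andP: hy.
Qed.

End Analytic.

Section Limits.
Variable R : realType.

Lemma aN_pos (a : R) N : 0 < a -> (2 <= N)%N -> 0 < aN a N.
Proof.
move=> a0 N2; rewrite /aN divr_gt0 // ?ltr0n; last by apply: leq_trans N2.
by rewrite mulr_gt0 // ln_gt0 // ltr1n.
Qed.

Lemma ln_near (C : R) : \forall N \near \oo, C <= ln (N%:R : R).
Proof.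
apply: filterS (nbhs_infty_ger (expR C)) => N hN.
have Np : 0 < (N%:R : R) by apply: lt_le_trans hN; exact: expR_gt0.
by rewrite -[C]expRK ler_ln ?posrE ?expR_gt0.
Qed.

Lemma tail_small (a c e : R) : 0 < a -> 1 < c -> 0 < e ->
  \forall N \near \oo, forall j : nat, c * N%:R <= a * j%:R ->
    N%:R * expR (- (aN a N * j%:R)) <= e.
Proof.
move=> a0 c1 e0.
apply: filterS2 (ln_near (- ln e / (c - 1))) (nbhs_infty_ge 2) => N hl N2 j hj.
have Np : 0 < (N%:R : R) by rewrite ltr0n; apply: leq_trans N2.
have L0 : 0 < ln (N%:R : R) by rewrite ln_gt0 // ltr1n.
set L := ln (N%:R : R) in hl L0 *.
have h1 : c * L <= aN a N * j%:R.
  rewrite /aN -/L (_ : a * L / N%:R * j%:R = (a * j%:R / N%:R) * L); last first.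
    by rewrite mulrAC -!mulrA; congr (_ * _); rewrite mulrC mulrA.
  apply: ler_wpM2r; first exact: ltW.
  by rewrite ler_pdivlMr.
have h2 : L - c * L <= ln e.
  have c0 : 0 < c - 1 by rewrite subr_gt0.
  move: hl; rewrite ler_pdivrMr // => hl; nra.
apply: (@le_trans _ _ (N%:R * expR (- (c * L)))).
  by apply: ler_wpM2l; [exact: ltW | rewrite ler_expR lerN2].
rewrite -{1}(lnK (_ : (N%:R : R) \is Num.pos)) ?posrE // -expRD.
by rewrite -[X in _ <= X](lnK (_ : e \is Num.pos)) ?posrE // ler_expR.
Qed.

End Limits.

Arguments aN_pos {R a N}. Arguments mean_lo {R b N k}. Arguments mean_hi {R b N k}.
Arguments Pk_hi {R b N k}. Arguments Pk_lo {R b N k}. Arguments Pk_le1 {R b N k}.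
Arguments G_gt0 {R b M}. Arguments Prob_event {R b N k}. Arguments tail_small {R a c e}.
Arguments ln_near {R}.

Section P1.
Variable R : realType.

Lemma part1 (a : R) : 0 < a -> a < 1 ->
  (fun N : nat => mean_n0 N (aN a N) / N%:R) @ \oo --> 0.
Proof.
move=> a0 a1; apply/cvgrPdist_le => e e0.
pose e' := Num.min e 1.
have e'0 : 0 < e' by rewrite lt_min e0 ltr01.
have e'1 : e' <= 1 by rewrite ge_min lexx orbT.
have e'e : e' <= e by rewrite ge_min lexx.
pose C := (2 / e' + 1) * (2 / (e' * (1 - a))).
near=> N.
have N2 : (2 <= N)%N by near: N; exact: nbhs_infty_ge.
have hl : C <= ln (N%:R : R) by near: N; exact: ln_near.
have Np : 0 < (N%:R : R) by rewrite ltr0n; apply: leq_trans N2.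
set b := aN a N.
have b0 : 0 < b := aN_pos a0 N2.
pose k := Num.trunc (e' * N%:R / 2).
have hk0 : 0 <= e' * N%:R / 2 by rewrite divr_ge0 // mulr_ge0 // ltW.
have hk1 : k%:R <= e' * N%:R / 2 by rewrite truncn_le.
have hk2 : e' * N%:R / 2 < k%:R + 1.
  by case/andP: (truncn_itv hk0) => _; rewrite -/k natr1.
have kN : (k <= N)%N.
  rewrite -(ler_nat R); apply: le_trans hk1 _; nra.
have m0 : 0 <= mean_n0 N b by have := mean_lo b0 (leq0n N); rewrite mul0r.
have mh := mean_hi b0 kN.
have Ph := Pk_hi b0 kN.
have P0 : 0 <= Pk b N k by rewrite /Pk divr_ge0 // ltW // G_gt0.
set y := expR (- (b * N%:R)) in Ph.
have yE : y = expR (- (a * ln (N%:R : R))).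
  by rewrite /y /b /aN divfK // lt0r_neq0.
have y0 : 0 <= y by rewrite /y expR_ge0.
have y1 : y <= 1.
  rewrite yE expR_le1 oppr_le0; apply: mulr_ge0; first exact: ltW.
  by apply: ln_ge0; rewrite ler1n; apply: leq_trans N2.
have Ny : (1 - a) * ln (N%:R : R) <= N%:R * y.
  rewrite yE -{2}(lnK (_ : (N%:R : R) \is Num.pos)) ?posrE // -expRD.
  apply: le_trans (expR_ge1Dx _); rewrite mulrBl mul1r; lra.
have CE : e' / 2 * (1 - a) * C = 2 / e' + 1.
  rewrite /C; field; apply/andP; split; apply: lt0r_neq0 => //; lra.
have ky : 2 / e' <= k%:R * y.
  have h1 : (e' * N%:R / 2 - 1) * y <= k%:R * y by apply: ler_wpM2r => //; lra.
  apply: le_trans h1.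
  have h2 : e' / 2 * (1 - a) * C <= e' / 2 * (N%:R * y).
    rewrite -mulrA; apply: ler_wpM2l; first by rewrite divr_ge0 // ltW.
    apply: le_trans Ny; apply: ler_wpM2l; [lra | exact: hl].
  rewrite CE in h2.
  have -> : (e' * N%:R / 2 - 1) * y = e' / 2 * (N%:R * y) - y.
    by ring.
  lra.
have Pe : Pk b N k <= e' / 2.
  have t0 : 0 < 2 / e' by rewrite divr_gt0.
  have h3 : Pk b N k * (2 / e') <= 1.
    apply: le_trans Ph; apply: ler_wpM2l => //; lra.
  rewrite -(ler_pM2r t0) (le_trans h3) //.
  have E2 : e' / 2 * (2 / e') = 1 by field; exact: lt0r_neq0.
  by rewrite E2.
rewrite sub0r normrN ger0_norm; last by rewrite divr_ge0 // ltW.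
rewrite ler_pdivrMr //; apply: le_trans mh _.
have h4 : N%:R * Pk b N k <= N%:R * (e' / 2) by apply: ler_wpM2l => //; exact: ltW.
have h5 : e' * N%:R <= e * N%:R by apply: ler_wpM2r => //; exact: ltW.
lra.
Unshelve. all: by end_near.
Qed.

End P1.

Section P2.
Variable R : realType.

Lemma event_eq (N m : nat) : (0 < N)%N -> (m <= N)%N ->
  [set n : nat -> nat | 1 - m%:R / N%:R <= (n 0%N)%:R / N%:R :> R] =
  [set n | (N - m <= n 0%N)%N].
Proof.
move=> N0 mN; have Np : 0 < (N%:R : R) by rewrite ltr0n.
have -> : 1 - m%:R / N%:R = (N - m)%N%:R / N%:R :> R.
  by rewrite natrB // mulrBl divff // lt0r_neq0.
by apply/seteqP; split => n /=; rewrite ler_pM2r ?invr_gt0 // ler_nat.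
Qed.

Lemma part2 (a : R) : 0 < a -> 1 < a ->
  forall (m : nat -> nat) (L : R),
        (forall N, (m N <= N)%N) ->
        (fun N : nat => 1 - (m N)%:R / N%:R : R) @ \oo --> (L : R^o) ->
        0 < L -> L < 1 - a^-1 ->
        (fun N : nat =>
           Prob N (aN a N)
             [set n | 1 - (m N)%:R / N%:R <= (n 0%N)%:R / N%:R :> R]) @ \oo --> (1 : R^o).
Proof.
move=> a0 a1 m L hm cvL L0 La.
apply/cvgrPdist_le => e e0.
pose d := (1 - a^-1 - L) / 2.
have d0 : 0 < d by rewrite divr_gt0 // subr_gt0.
have ia : a * a^-1 = 1 by rewrite mulfV // lt0r_neq0.
have c1 : 1 < 1 + a * d by rewrite ltrDl mulr_gt0.
move/cvgrPdist_le: cvL => /(_ d d0) cvL.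
have TS := tail_small a0 c1 e0.
near=> N.
have N2 : (2 <= N)%N by near: N; exact: nbhs_infty_ge.
have hL : `|L - (1 - (m N)%:R / N%:R)| <= d by near: N; exact: cvL.
have TN : forall j : nat, (1 + a * d) * N%:R <= a * j%:R -> N%:R * expR (- (aN a N * j%:R)) <= e.
  by near: N; exact: TS.
have Np : 0 < (N%:R : R) by rewrite ltr0n; apply: leq_trans N2.
have b0 : 0 < aN a N := aN_pos a0 N2.
have kN : (N - m N <= N)%N by exact: leq_subr.
rewrite event_eq //; last by apply: leq_trans N2.
rewrite Prob_event //.
have P1 := Pk_le1 b0 kN.
have Plo := Pk_lo b0 kN.
rewrite subKn // in Plo.
rewrite ger0_norm ?subr_ge0 //.
have hc : (1 + a * d) * N%:R <= a * (m N)%:R.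
  set r := (m N)%:R / N%:R in hL.
  have rE : (m N)%:R = r * N%:R by rewrite /r divfK // lt0r_neq0.
  rewrite rE [X in _ <= X]mulrA; apply: ler_wpM2r; first exact: ltW.
  move: hL; rewrite ler_norml => /andP[h1 h2].
  have h3 : 1 - L - d <= r by lra.
  have h4 : a * (1 - L - d) <= a * r by apply: ler_wpM2l => //; exact: ltW.
  have h5 : a * (1 - L - d) = 1 + a * d.
    by rewrite /d; field; exact: lt0r_neq0.
  lra.
have := TN (m N) hc.
lra.
Unshelve. all: by end_near.
Qed.

End P2.

Section P3.
Variable R : realType.

Lemma part3 (a : R) : 0 < a -> 1 < a ->
  forall eps : R, 0 < eps ->
        \forall N \near \oo, 1 - a^-1 - eps <= mean_n0 N (aN a N) / N%:R.
Proof.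
move=> a0 a1 eps eps0.
have ia : a * a^-1 = 1 by rewrite mulfV // lt0r_neq0.
have ia0 : 0 < a^-1 by rewrite invr_gt0.
have [th0|th0] := lerP (1 - a^-1 - eps / 2) 0.
  near=> N.
  have N2 : (2 <= N)%N by near: N; exact: nbhs_infty_ge.
  have Np : 0 < (N%:R : R) by rewrite ltr0n; apply: leq_trans N2.
  have b0 : 0 < aN a N := aN_pos a0 N2.
  have m0 : 0 <= mean_n0 N (aN a N) by have := mean_lo b0 (leq0n N); rewrite mul0r.
  have : 0 <= mean_n0 N (aN a N) / N%:R by rewrite divr_ge0 // ltW.
  lra.
set th := 1 - a^-1 - eps / 2 in th0.
have th1 : th < 1 by rewrite /th; lra.
have c1 : 1 < 1 + a * (eps / 2) by rewrite ltrDl mulr_gt0 // divr_gt0.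
have e4 : 0 < eps / 4 by rewrite divr_gt0.
have TS := tail_small a0 c1 e4.
near=> N.
have N2 : (2 <= N)%N by near: N; exact: nbhs_infty_ge.
have hN : 4 / eps <= (N%:R : R) by near: N; exact: nbhs_infty_ger.
have TN : forall j : nat, (1 + a * (eps / 2)) * N%:R <= a * j%:R ->
    N%:R * expR (- (aN a N * j%:R)) <= eps / 4.
  by near: N; exact: TS.
have Np : 0 < (N%:R : R) by rewrite ltr0n; apply: leq_trans N2.
have b0 : 0 < aN a N := aN_pos a0 N2.
pose k := Num.trunc (th * N%:R).
have hk0 : 0 <= th * N%:R by rewrite mulr_ge0 // ltW.
have hk1 : k%:R <= th * N%:R by rewrite truncn_le.
have hk2 : th * N%:R < k%:R + 1.
  by case/andP: (truncn_itv hk0) => _; rewrite -/k natr1.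
have kN : (k <= N)%N.
  rewrite -(ler_nat R); apply: le_trans hk1 _; nra.
have hc : (1 + a * (eps / 2)) * N%:R <= a * (N - k)%N%:R.
  rewrite natrB //.
  have h5 : a * (1 - th) = 1 + a * (eps / 2).
    by rewrite /th; field; exact: lt0r_neq0.
  rewrite -h5 -mulrA; apply: ler_wpM2l; first exact: ltW.
  nra.
have Plo := Pk_lo b0 kN.
have T1 := TN _ hc.
have Pge : 1 - eps / 4 <= Pk (aN a N) N k by lra.
have mlo := mean_lo b0 kN.
rewrite ler_pdivlMr //.
have k0 : 0 <= (k%:R : R) by [].
have h6 : k%:R * (1 - eps / 4) <= k%:R * Pk (aN a N) N k by apply: ler_wpM2l.
have h7 : k%:R * eps <= N%:R * eps by apply: ler_wpM2r; [exact: ltW | rewrite ler_nat].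
have h8 : 4 <= N%:R * eps by move: hN; rewrite ler_pdivrMr.
have h9 : (1 - a^-1 - eps) * N%:R = th * N%:R - eps / 2 * N%:R.
  by rewrite /th -mulrBl; congr (_ * _); lra.
rewrite h9.
nra.
Unshelve. all: by end_near.
Qed.

End P3.

Theorem corollary2 (R : realType) (a : R) (ha : 0 < a) :
  (a < 1 ->
     (fun N : nat => mean_n0 N (aN a N) / N%:R) @ \oo --> 0) /\
  (1 < a ->
     (forall (m : nat -> nat) (L : R),
        (forall N, (m N <= N)%N) ->
        (fun N : nat => 1 - (m N)%:R / N%:R : R) @ \oo --> (L : R^o) ->
        0 < L -> L < 1 - a^-1 ->
        (fun N : nat =>
           Prob N (aN a N)
             [set n | 1 - (m N)%:R / N%:R <= (n 0%N)%:R / N%:R :> R]) @ \oo --> (1 : R^o))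
   /\
     (forall eps : R, 0 < eps ->
        \forall N \near \oo, 1 - a^-1 - eps <= mean_n0 N (aN a N) / N%:R)).
Proof.
split; first exact: part1.
move=> a1; split; first exact: part2.
exact: part3.
Qed.
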